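(* Let $T$ be a non-abelian finite simple group, $r,s\in\pi(T)$, and let $G$ be a finite group with a solvable normal subgroup $N$ of order coprime to $r$ such that $G/N\cong E$ for a perfect central extension $E$ of $T$. Suppose that in every section of $G$ having $T$ as a section, no element of order $r$ or of order $s$ is central, and that for every prime $p\in\pi(N)\setminus\{s\}$ some element of $G$ of order $r$ acts trivially by conjugation on some Sylow $p$-subgroup of $N$. Then there exists a subgroup $H\le G$ with a normal $s$-subgroup $S$ such that $H/S$ is a perfect central extension of $T$.
   Context: All groups are finite. A perfect central extension of $T$ is a perfect group $E$ with $E/Z(E)\cong T$. A section of a group is a quotient of a subgroup. $\pi(N)$ is the set of prime divisors of $|N|$. *)

(* Defs.v *)
From mathcomp Require Import all_boot all_fingroup all_solvable.
Set Implicit Arguments. Unset Strict Implicit. Unset Printing Implicit Defensive.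
Local Open Scope group_scope.

Definition perfect_central_ext (eT tT : finGroupType) (E : {group eT}) (T : {group tT}) : bool :=
  ([~: E, E] == E) && ((E / 'Z(E))%G \isog T).

Definition has_section (xT tT : finGroupType) (X : {set xT}) (T : {group tT}) : Prop :=
  exists (A B : {group xT}), [/\ A \subset X, B <| A & (A / B)%G \isog T].

(* Main.v *)
Require Import Defs.
From mathcomp Require Import all_boot all_fingroup all_solvable.
Set Implicit Arguments. Unset Strict Implicit. Unset Printing Implicit Defensive.
Local Open Scope group_scope.

Lemma isog_center_quo (aT rT : finGroupType) (X : {group aT}) (Y : {group rT}) :
  X \isog Y -> (X / 'Z(X))%G \isog (Y / 'Z(Y))%G.
Proof.
case/isogP=> f injf fX.
have fZ : (f @* 'Z(X))%G = 'Z(Y)%G by apply: val_inj; rewrite /= injm_center // fX.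
have h : (X / 'Z(X))%G \isog (Y / (f @* 'Z(X))%G)%G.
  apply/isogP; exists (quotm_morphism f (center_normal X)).
    exact: injm_quotm.
  by rewrite /= morphim_quotm fX.
by rewrite fZ in h.
Qed.
Lemma center_quo_perfect (gT : finGroupType) (X A : {group gT}) :
  [~: X, X] = X -> A <| X -> A \subset 'Z(X) ->
  'Z(X / A) = 'Z(X) / A.
Proof.
move=> pX nsAX sAZ; have [sAX nAX] := andP nsAX.
apply/eqP; rewrite eqEsubset; apply/andP; split; last first.
  rewrite subsetI quotientS ?center_sub //=.
  by apply: quotient_cents; rewrite subIset // subxx orbT.
apply/subsetP=> xb /centerP[xbX xbC].
case/morphimP: xbX xbC => x nAx Xx -> xbC.
have cxX : coset A x \in 'C(X / A) by apply/centP.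
have sxX : <[x]> \subset X by rewrite cycle_subG.
have nAc : <[x]> \subset 'N(A) by rewrite cycle_subG.
have h1 : [~: <[x]>, X] \subset A.
  rewrite -quotient_sub1; last by rewrite (subset_trans _ nAX) // commg_subr (subset_trans sxX) ?normG.
  rewrite quotientR // quotient_cycle //.
  by apply/trivgP/commG1P; rewrite cycle_subG.
have cAX : A \subset 'C(X) by rewrite (subset_trans sAZ) // subIset // subxx orbT.
have h2 : [~: <[x]>, X, X] = 1 by apply/commG1P; rewrite (subset_trans h1).
have h3 : [~: X, <[x]>, X] = 1 by rewrite (commGC X).
have h4 := three_subgroup h3 h2.
rewrite pX in h4.
apply: mem_quotient; apply/centerP; split=> // y Xy.
have : x \in 'C(X) by rewrite -cycle_subG centsC; apply/commG1P.
by move/centP; apply.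
Qed.
Lemma pce_transfer (gT eT tT : finGroupType) (X A : {group gT}) (E : {group eT}) (T : {group tT}) :
  [~: X, X] = X -> A <| X -> A \subset 'Z(X) -> (X / A)%G \isog E ->
  perfect_central_ext E T -> perfect_central_ext X T.
Proof.
move=> pX nsAX sAZ iso /andP[_ iET]; rewrite /perfect_central_ext pX eqxx /=.
have hZ : 'Z(X / A)%G = ('Z(X) / A)%G by apply: val_inj; exact: center_quo_perfect.
have i1 : (X / A / 'Z(X / A))%G \isog (E / 'Z(E))%G.
  by apply: isog_center_quo.
rewrite hZ in i1.
have i2 := third_isog sAZ nsAX (center_normal X).
rewrite isog_sym in i2.
exact: isog_trans i2 (isog_trans i1 iET).
Qed.

Lemma qs_normal (eT tT : finGroupType) (E Y : {group eT}) (T : {group tT}) :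
  simple T -> perfect_central_ext E T -> Y <| E -> Y \subset 'Z(E) \/ Y = E :> {set eT}.
Proof.
move=> simT /andP[/eqP pE iET] nsYE; have [sYE nYE] := andP nsYE.
have simQ : simple (E / 'Z(E))%G by rewrite (isog_simple iET).
have nZE : E \subset 'N('Z(E)) by apply: normal_norm; apply: center_normal.
case/simpleP: simQ => _ /(_ (Y / 'Z(E))%G (quotient_normal _ nsYE)) [] /= h.
  left; rewrite -quotient_sub1 ?(subset_trans sYE) // h //.
right; apply/eqP; rewrite eqEsubset sYE /=.
have sEYZ : E \subset 'Z(E) * Y by rewrite -quotientSK // h.
rewrite -{1}pE -derg1 der1_min //.
apply: abelianS (quotient_abelian Y (center_abelian E)).
by apply: subset_trans (quotientS Y sEYZ) _; rewrite quotientMidr.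
Qed.

Theorem lemma1p17 (tT gT : finGroupType) (T : {group tT}) (r s : nat)
    (G N : {group gT}) :
  simple T -> ~~ abelian T ->
  r \in \pi(#|T|) -> s \in \pi(#|T|) ->
  N <| G -> solvable N -> coprime #|N| r ->
  perfect_central_ext (G / N)%G T ->
  (forall K L : {group gT}, K \subset G -> L <| K ->
     has_section (K / L) T ->
     forall x, x \in K / L -> (#[x] == r) || (#[x] == s) -> x \notin 'Z(K / L)) ->
  (forall p, p \in \pi(#|N|) -> p != s ->
     exists2 g, g \in G & #[g] = r /\ exists2 P : {group gT}, P \in 'Syl_p(N) & g \in 'C(P)) ->
  exists H : {group gT}, H \subset G /\
    exists S : {group gT}, [/\ S <| H, s.-group S & perfect_central_ext (H / S)%G T].
Proof.
move=> simT nabT rT sT nsNG solN coNr pceGN hsec hsyl.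
have [sNG nNG] := andP nsNG.
have pr_r : prime r by move: rT; rewrite mem_primes => /and3P[].
have hE : has_section (G / N) T.
  exists (G / N)%G, 'Z(G / N)%G; split=> //; first exact: center_normal.
  by case/andP: pceGN.
have noncent : forall y, y \in G -> #[y] = r -> coset N y \notin 'Z(G / N).
  move=> y Gy oy; apply: (hsec G N (subxx _) nsNG hE); first exact: mem_quotient.
  have yN : y \notin N.
    apply/negP=> Ny; have := order_dvdG Ny; rewrite oy => dvd.
    by move: coNr; rewrite coprime_sym prime_coprime // dvd.
  have : #[coset N y] %| r by rewrite -oy; apply: morph_order; apply: (subsetP nNG).
  case/primeP: pr_r => _ hd /hd /orP[] /eqP o1; last by rewrite o1 eqxx.
  exfalso; move/eqP: o1; rewrite order_eq1 => /eqP c1.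
  by case/negP: yN; apply: coset_idr c1; apply: (subsetP nNG).
have [H /mingroupP[/andP[sHG sGNH] minH]] :
    {H : {group gT} | [min H | (H \subset G) && (G \subset N * H)]}.
  by apply: ex_mingroup; exists G; rewrite subxx mulG_subr.
have nNH : H \subset 'N(N) := subset_trans sHG nNG.
have eHN : H / N = G / N.
  apply/eqP; rewrite eqEsubset quotientS //= quotientSK //.
have perH : [~: H, H] = H.
  apply: (minH [~: H, H]%G); last exact: der1_subG.
  rewrite (subset_trans (der1_subG _) sHG) /=.
  rewrite -quotientSK // quotientR // eHN.
  by case/andP: pceGN => /eqP -> _.
set K := (H :&: N)%G.
have nsKH : K <| H by apply: normalGI nsNG.
have sKN : K \subset N by apply: subsetIr.
have sKH : K \subset H by apply: subsetIl.
have PnH : forall p (P : {group gT}), p.-Sylow(K) P -> H \subset 'N(P).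
  move=> p P sylP; have fr := Frattini_arg nsKH sylP.
  have <- : 'N_H(P) = H :> {set gT}.
    apply: (minH 'N_H(P)%G); last exact: subsetIl.
    rewrite (subset_trans (subsetIl _ _) sHG) /=.
    by rewrite (subset_trans sGNH) // -{1}fr mulgA (mulGSid sKN).
  exact: subsetIr.
have PcH : forall p (P : {group gT}), p.-Sylow(K) P -> p != s -> H \subset 'C(P).
  move=> p P sylP nps.
  have pP := pHall_pgroup sylP; have sPK := pHall_sub sylP.
  have [P1|ntP] := eqVneq P 1%G; first by rewrite P1 cents1.
  have [pr_p dvdP _] := pgroup_pdiv pP ntP.
  have piN : p \in \pi(#|N|).
    rewrite mem_primes pr_p cardG_gt0 /=.
    exact: dvdn_trans dvdP (cardSg (subset_trans sPK sKN)).
  have [g Gg [og [P0 P0syl cgP0]]] := hsyl p piN nps.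
  have [Q sylQ sPQ] := Sylow_superset (subset_trans sPK sKN) pP.
  move: P0syl; rewrite inE => P0syl.
  have [x Nx defQ] := Sylow_trans P0syl sylQ.
  set y := g ^ x.
  have Gy : y \in G by rewrite groupJ // (subsetP sNG).
  have oy : #[y] = r by rewrite orderJ.
  have cyP : y \in 'C(P).
    apply: (subsetP (centS sPQ)); rewrite defQ centJ memJ_conjg //.
  set X := 'N_G(P)%G; set Y := 'C_G(P)%G.
  have nsYX : Y <| X := subcent_normal G P.
  have sHX : H \subset X by rewrite subsetI sHG (PnH p P sylP).
  have nYH : H \subset 'N(Y) := subset_trans sHX (normal_norm nsYX).
  have Yy : y \in Y by rewrite inE Gy cyP.
  have eXN : X / N = G / N.
    apply/eqP; rewrite eqEsubset quotientS ?subsetIl //= -eHN quotientS //.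
  have nsYNG : (Y / N)%G <| (G / N)%G by rewrite /= -eXN quotient_normal.
  have sGNY : G \subset N * Y.
    case: (qs_normal simT pceGN nsYNG) => /= h.
      by case/negP: (noncent y Gy oy); apply: (subsetP h); apply: mem_quotient.
    by rewrite -quotientSK // h.
  have sHYN : H / Y \subset N / Y.
    by apply: subset_trans (quotientS Y (subset_trans sHG sGNY)) _; rewrite quotientMidr.
  have solNY : solvable (N / Y)%G by apply: quotient_sol.
  have : (H / Y)%G :==: 1.
    apply/negPn/negP => ntHY.
    have := sol_der1_proper solNY sHYN ntHY.
    by rewrite derg1 /= -quotientR // perH properE subxx.
  move/eqP/trivgP; rewrite quotient_sub1 // => sHY.
  by rewrite (subset_trans sHY) ?subsetIr.
have [S sylS] := Sylow_exists s K.
have sSK := pHall_sub sylS.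
have nSH := PnH s S sylS.
have nsSH : S <| H by rewrite /normal (subset_trans sSK sKH) nSH.
have nsSK : S <| K by rewrite /normal sSK (subset_trans sKH nSH).
set C := 'C_K(H)%G.
have sCH : C \subset H by rewrite (subset_trans (subsetIl _ _) sKH).
have sKSC : K \subset S <*> C.
  rewrite -{1}(Sylow_gen K) gen_subG; apply/bigcupsP=> P /SylowP[p pr_p sylP].
  have [eps|nps] := eqVneq p s.
    rewrite eps in sylP.
    rewrite (subset_trans _ (joing_subl _ _)) // (sub_normal_Hall sylS nsSK (pHall_sub sylP)).
    exact: pHall_pgroup sylP.
  rewrite (subset_trans _ (joing_subr _ _)) // subsetI (pHall_sub sylP) centsC.
  exact: PcH sylP nps.
exists H; split=> //; exists S; split=> //; first exact: pHall_pgroup sylS.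
apply: (@pce_transfer _ _ _ (H / S)%G (K / S)%G (G / N)%G).
- by rewrite /= -quotientR // perH.
- exact: quotient_normal.
- rewrite /= (subset_trans (quotientS S sKSC)) // quotientYidl ?(subset_trans sCH) //.
  rewrite subsetI quotientS //=; apply: quotient_cents; exact: subsetIr.
- apply: isog_trans (third_isog sSK nsSH nsKH) _.
  have := second_isog nNH; rewrite setIC eHN; exact.
- exact: pceGN.
Qed.
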